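(* Let $p$ be a prime, $A=\{0,1,\dots,p-1\}$ viewed as $\mathbb Z_p$, $n\ge3$, and let $\rho\subseteq A^n$ have full pattern and satisfy $$\{(x_1,\dots,x_n)\in A^n:\ x_1+\dots+x_n\equiv0\pmod p\}\subsetneq\rho.$$ Then $\rho=A^n$.
   Context: The pattern of $\rho\subseteq A^n$: for $i\ne j$, $i\overset{\rho}{\sim}j$ iff there do NOT exist $a_1,\dots,a_n,b_i,b_j\in A$ with $(a_1,\dots,a_n)\notin\rho$ while the tuples obtained by replacing $a_i$ by $b_i$, replacing $a_j$ by $b_j$, and replacing both, all lie in $\rho$. The pattern is full if $i\overset{\rho}{\sim}j$ for all $i,j\in\{1,\dots,n\}$. *)

(* Defs.v *)
From mathcomp Require Import all_boot.
Set Implicit Arguments. Unset Strict Implicit. Unset Printing Implicit Defensive.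

Definition upd (p n : nat) (a : {ffun 'I_n -> 'I_p}) (i : 'I_n) (b : 'I_p)
  : {ffun 'I_n -> 'I_p} := [ffun k => if k == i then b else a k].

Definition pattern_rel (p n : nat) (rho : {set {ffun 'I_n -> 'I_p}})
  (i j : 'I_n) : Prop :=
  ~ exists (a : {ffun 'I_n -> 'I_p}) (bi bj : 'I_p),
      [/\ a \notin rho, upd a i bi \in rho, upd a j bj \in rho
        & upd (upd a i bi) j bj \in rho].

Definition full_pattern (p n : nat) (rho : {set {ffun 'I_n -> 'I_p}}) : Prop :=
  forall i j : 'I_n, i != j -> pattern_rel rho i j.

Definition sum_zero_rel (p n : nat) : {set {ffun 'I_n -> 'I_p}} :=
  [set x : {ffun 'I_n -> 'I_p} | (\sum_(k < n) (x k : nat)) %% p == 0].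

(* Main.v *)
Require Import Defs.
From mathcomp Require Import all_boot.
From mathcomp Require Import all_algebra ring.
Import GRing.Theory.


Section Proof.
Variables (q n : nat) (rho : {set {ffun 'I_n -> 'I_q.+2}}).
Local Notation T := {ffun 'I_n -> 'I_q.+2}.
Local Open Scope ring_scope.

Definition sig (x : T) : 'I_q.+2 := \sum_(k < n) x k.

Lemma val_sig x : val (sig x) = ((\sum_(k < n) (x k : nat)) %% q.+2)%N.
Proof.
rewrite /sig; elim/big_rec2: _ => [|k a b _ IH] //=.
by rewrite IH modnDmr.
Qed.

Lemma sig_upd x i b : sig (upd x i b) = sig x - x i + b.
Proof.
rewrite /sig (bigD1 i) //= [in RHS](bigD1 i) //= ffunE eqxx.
rewrite (eq_bigr (fun k => x k)); last by move=> k /negbTE Hk; rewrite ffunE Hk.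
ring.
Qed.

Lemma upd_id (x : T) i : upd x i (x i) = x.
Proof. by apply/ffunP => k; rewrite ffunE; case: eqP => [->|]. Qed.

Lemma upd_upd_same (x : T) i a b : upd (upd x i a) i b = upd x i b.
Proof. by apply/ffunP => k; rewrite !ffunE; case: eqP. Qed.

Lemma upd_swap (x : T) i j a b : i != j -> upd (upd x i a) j b = upd (upd x j b) i a.
Proof.
move=> Hij; apply/ffunP => k; rewrite !ffunE.
case: (eqVneq k j) => [->|Hkj]; first by rewrite eq_sym (negbTE Hij).
by case: (eqVneq k i).
Qed.

Lemma upd_ne (x : T) i b k : k != i -> upd x i b k = x k.
Proof. by rewrite ffunE => /negbTE ->. Qed.

Lemma upd_eq (x : T) i b : upd x i b i = b.
Proof. by rewrite ffunE eqxx. Qed.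

Hypothesis Hp : prime q.+2.
Hypothesis Hn : (2 < n)%N.
Hypothesis Hfp : full_pattern rho.
Hypothesis H0 : forall x, sig x = 0 -> x \in rho.

Lemma rect y i j v u : i != j -> y \in rho -> upd y i v \in rho ->
  upd y j u \in rho -> upd (upd y i v) j u \in rho.
Proof.
move=> Hij Hy Hi Hj; case: (boolP (_ \in rho)) => // Ha; exfalso.
move: (Hfp i j Hij); rewrite /pattern_rel; apply; exists (upd (upd y i v) j u), (y i), (y j); split => //.
- by rewrite upd_swap 1?eq_sym // upd_upd_same (upd_id y i).
- by rewrite upd_upd_same -(upd_ne y i v j (_ : j != i)) ?upd_id // eq_sym.
- rewrite (upd_swap y) // upd_upd_same (upd_swap (upd y j u)) // upd_upd_same.
  by rewrite (upd_id y j) (upd_id y i).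
Qed.

Lemma third (i k : 'I_n) : exists j : 'I_n, (j != i) && (j != k).
Proof.
case: (boolP [exists j, (j != i) && (j != k)]) => [/existsP //|/existsPn H].
exfalso.
have: [set: 'I_n] \subset [set i; k].
  apply/subsetP => j _; rewrite !inE; move: (H j); rewrite negb_and !negbK.
  by case/orP => ->; rewrite ?orbT.
move/subset_leq_card; rewrite cardsT card_ord cards2 => H2.
have : (n <= 2)%N by apply: leq_trans H2 _; case: (i != k).
by rewrite leqNgt Hn.
Qed.

Lemma L2 x i j v u : x \in rho -> i != j -> sig (upd x i v) = 0 ->
  sig (upd x j u) = 0 -> upd (upd x i v) j u \in rho.
Proof. by move=> Hx Hij Hi Hj; apply: rect => //; apply: H0. Qed.

Lemma T1 x i k : x \in rho -> i != k ->
  upd (upd x i (x i - sig x)) k (x k + sig x) \in rho.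
Proof.
move=> Hx Hik; have [j /andP [Hji Hjk]] := third i k.
set t := sig x.
have Hw : upd (upd x i (x i - t)) j (x j - t) \in rho.
  by apply: L2 => //; [rewrite eq_sym | rewrite sig_upd /t; ring | rewrite sig_upd /t; ring].
set w := upd (upd x i (x i - t)) j (x j - t) in Hw.
have Hsw : sig w = - t by rewrite /w !sig_upd upd_ne // /t; ring.
have Hwk : w k = x k by rewrite /w !upd_ne // eq_sym.
have H : upd (upd w k (w k + t)) j (w j + t) \in rho.
  apply: L2 => //; first by rewrite eq_sym.
    by rewrite sig_upd Hsw; ring.
  by rewrite sig_upd Hsw; ring.
suff -> : upd (upd x i (x i - t)) k (x k + t) = upd (upd w k (w k + t)) j (w j + t) by [].
apply/ffunP => l; rewrite /w !ffunE.
case: (eqVneq l j) => [->|Hlj]; first by rewrite (negbTE Hjk) (negbTE Hji) !eqxx; ring.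
have Hkj : k != j by rewrite eq_sym. have Hki : k != i by rewrite eq_sym.
rewrite (negbTE Hkj) (negbTE Hki).
by case: (eqVneq l k).
Qed.

Lemma T2 x i k m : x \in rho -> i != k ->
  upd (upd x i (x i - sig x *+ m)) k (x k + sig x *+ m) \in rho.
Proof.
move=> Hx Hik; elim: m => [|m IH].
  by rewrite mulr0n subr0 addr0 (upd_id x i) (upd_id x k).
set z := upd (upd x i (x i - sig x *+ m)) k (x k + sig x *+ m) in IH.
have Hki : k != i by rewrite eq_sym.
have Hsz : sig z = sig x by rewrite /z !sig_upd upd_ne //; ring.
have Hzi : z i = x i - sig x *+ m by rewrite /z upd_ne // upd_eq.
have Hzk : z k = x k + sig x *+ m by rewrite /z upd_eq.
have := T1 z i k IH Hik; rewrite Hsz Hzi Hzk /z.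
rewrite (upd_swap x) // upd_upd_same upd_swap 1?eq_sym // upd_upd_same.
have -> : x i - sig x *+ m.+1 = x i - sig x *+ m - sig x by rewrite mulrSr; ring.
have -> : x k + sig x *+ m.+1 = x k + sig x *+ m + sig x by rewrite mulrSr; ring.
by rewrite upd_swap.
Qed.

Lemma mult_any (t d : 'I_q.+2) : t != 0 -> exists m, t *+ m = d.
Proof.
move=> Ht.
have Hu : t \is a GRing.unit.
  have := unitZpE (p:=q.+2) t (isT : (1 < q.+2)%N).
  rewrite (natr_Zp t) => ->; rewrite prime_coprime // gtnNdvd //.
  by rewrite lt0n; move: Ht; apply: contra => /eqP H; apply/eqP/val_inj.
exists (val (t^-1 * d)); rewrite -mulr_natr natr_Zp mulrA mulrV // mul1r //.
Qed.

Lemma T3 x i k a : x \in rho -> sig x != 0 -> i != k ->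
  upd (upd x i a) k (x k + (x i - a)) \in rho.
Proof.
move=> Hx Hs Hik; have [m Hm] := mult_any (sig x) (x i - a) Hs.
have := T2 x i k m Hx Hik; rewrite Hm.
by have -> : x i - (x i - a) = a by ring.
Qed.

Lemma eq_from (y r : T) i0 : sig y = sig r -> (forall k, k != i0 -> y k = r k) -> y = r.
Proof.
move=> Hs Hk.
have Hi0 : y i0 = r i0.
  move: Hs; rewrite /sig (bigD1 i0) //= [X in _ = X](bigD1 i0) //=.
  by rewrite (eq_bigr (fun k => r k)) => [/addIr|k /Hk].
by apply/ffunP => k; case: (eqVneq k i0) => [->|/Hk].
Qed.

Lemma T4 x r : x \in rho -> sig x != 0 -> sig r = sig x -> r \in rho.
Proof.
move=> Hx Hs0 Hr.
have i0 : 'I_n := Ordinal (ltn_trans (isT : (0 < 2)%N) Hn).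
suff H : forall m (y : T), (#|[set k | (k != i0) && (y k != r k)]| <= m)%N ->
  y \in rho -> sig y = sig x -> r \in rho by exact: (H _ x (leqnn _) Hx).
have Base : forall y : T, [set k | (k != i0) && (y k != r k)] = set0 ->
   y \in rho -> sig y = sig x -> r \in rho.
  move=> y Hy0 Hy Hsy; suff <- : y = r by [].
  apply: (eq_from y r i0); first by rewrite Hsy Hr.
  move=> k Hk; apply/eqP; apply/negPn/negP => Hne.
  have : k \in [set k | (k != i0) && (y k != r k)] by rewrite inE Hk Hne.
  by rewrite Hy0 inE.
elim=> [|m IH] y Hc Hy Hsy.
  by apply: (Base y) => //; apply/eqP; rewrite -cards_eq0 -leqn0.
set S := [set k | (k != i0) && (y k != r k)] in Hc.
case: (eqVneq S set0) => [/Base|]; first by apply.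
case/set0Pn => k; rewrite inE => /andP [Hk0 Hkr].
have Hk : k \in S by rewrite inE Hk0 Hkr.
have Hsy0 : sig y != 0 by rewrite Hsy.
have Hy' := T3 y k i0 (r k) Hy Hsy0 Hk0.
apply: (IH _ _ Hy').
  rewrite -ltnS; apply: leq_trans Hc.
  rewrite (cardsD1 k S) Hk add1n ltnS.
  apply: subset_leq_card; apply/subsetP => l; rewrite !inE => /andP [Hl0 Hl].
  rewrite upd_ne // in Hl; rewrite Hl0 /=.
  case: (eqVneq l k) Hl => [->|Hlk]; first by rewrite upd_eq eqxx.
  by rewrite upd_ne.
have Hi0k : i0 != k by rewrite eq_sym.
by rewrite !sig_upd upd_ne // -Hsy; ring.
Qed.

Lemma Fall (c : T) : c \in rho -> sig c != 0 -> forall r, r \in rho.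
Proof.
move=> Hc Hc0.
have Fadd : forall a b, (forall r, sig r = a -> r \in rho) ->
   (forall r, sig r = b -> r \in rho) -> (forall r, sig r = a + b -> r \in rho).
  move=> a b Ha Hb r Hr.
  have i : 'I_n := Ordinal (ltn_trans (isT : (0 < 2)%N) Hn).
  have [j /andP [Hji _]] := third i i.
  have Hij : i != j by rewrite eq_sym.
  set y := upd (upd r i (r i - a)) j (r j - b).
  have Hyi : y i = r i - a by rewrite /y upd_ne // upd_eq.
  have Hyj : y j = r j - b by rewrite /y upd_eq.
  have Hsy : sig y = 0 by rewrite /y !sig_upd upd_ne // Hr; ring.
  have -> : r = upd (upd y i (r i)) j (r j).
    apply/ffunP => l; rewrite /y !ffunE.
    case: (eqVneq l j) => [->|]; first by [].
    by case: (eqVneq l i) => [->|].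
  apply: rect => //; first exact: H0.
    by apply: Ha; rewrite sig_upd Hsy Hyi; ring.
  by apply: Hb; rewrite sig_upd Hsy Hyj; ring.
have Fm : forall m r, sig r = sig c *+ m -> r \in rho.
  elim=> [|m IH] r; first by rewrite mulr0n; apply: H0.
  rewrite mulrSr; apply: Fadd => // r' Hr'; apply: (T4 c r' Hc Hc0 Hr').
move=> r; have [m Hm] := mult_any (sig c) (sig r) Hc0.
exact: (Fm m r (esym Hm)).
Qed.

End Proof.

Theorem mainTheorem17 (p n : nat) (rho : {set {ffun 'I_n -> 'I_p}}) :
  prime p -> 3 <= n -> full_pattern rho ->
  sum_zero_rel p n \proper rho ->
  rho = [set: {ffun 'I_n -> 'I_p}].
Proof.
case: p rho => [|[|q]] rho Hp //= Hn Hfp /properP [Hsub [c Hc Hcn]].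
have H0 : forall x, sig q n x = 0%R -> x \in rho.
  move=> x Hx; apply: (subsetP Hsub); rewrite inE -val_sig Hx //.
have Hc0 : sig q n c != (0 : 'I_q.+2)%R.
  move: Hcn; rewrite inE -val_sig; apply: contra => /eqP ->; by [].
apply/setP => r; rewrite inE.
exact: (Fall q n rho Hp Hn Hfp H0 c Hc Hc0 r).
Qed.
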